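(* Let $k\ge 1$, $d\ge 1$, $n\ge 1$ and $t\ge k$ be integers, and let $F_1,\dots,F_n\subset\mathbb{R}^d$ be sets of $t$ points each (regarded as colour classes). (i) If $n=(k-1)d+1$ and $t=k$, then there is a colourful $k$-partition $A_1,\dots,A_k$ of $F_1,\dots,F_n$ whose convex hulls intersect with equal coefficients. (ii) If $n<(k-1)d+1$, then for every value of $t$ the statement in (i) fails: there exist sets $F_1,\dots,F_n\subset\mathbb{R}^d$ of $t$ points each such that no colourful $k$-partition of them has convex hulls intersecting with equal coefficients.
   Context: A colourful set is a set containing exactly one point from each colour class $F_j$. A colourful $k$-partition of $F_1,\dots,F_n$ is a family of $k$ pairwise disjoint colourful sets $A_1,\dots,A_k$ (even if the classes have more than $k$ points). We write $A_i=\{x^i_j : x^i_j\in F_j,\ j=1,\dots,n\}$. The convex hulls of $A_1,\dots,A_k$ intersect with equal coefficients if there are real numbers $\alpha_1,\dots,\alpha_n\ge 0$ with $\sum_j\alpha_j=1$ such that the point $\sum_{j=1}^n\alpha_j x^i_j$ is the same for all $i=1,\dots,k$. *)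

(* Defs.v *)
From HB Require Import structures.
From mathcomp Require Import all_boot all_order all_algebra.
From mathcomp Require Import reals.
Set Implicit Arguments. Unset Strict Implicit. Unset Printing Implicit Defensive.
Import Order.TTheory GRing.Theory Num.Theory.
Local Open Scope ring_scope.

(* A configuration of n colour classes of t points each in R^d:
   F j l is the l-th point of colour class F_j. *)

(* All points are distinct: each F_j is a set of t (distinct) points,
   and the colour classes are pairwise disjoint. *)
Definition distinct_points (R : realType) (d n t : nat)
  (F : 'I_n -> 'I_t -> 'rV[R]_d) : Prop :=
  injective (fun p : 'I_n * 'I_t => F p.1 p.2).

(* A colourful k-partition: A_i = { F j (s i j) : j }, and the A_i are
   pairwise disjoint, i.e. in each class distinct i pick distinct points. *)
Definition colourful_partition (n t k : nat) (s : 'I_k -> 'I_n -> 'I_t) : Prop :=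
  forall j : 'I_n, injective (fun i : 'I_k => s i j).

Definition eq_coeff_intersect (R : realType) (d n t k : nat)
  (F : 'I_n -> 'I_t -> 'rV[R]_d) (s : 'I_k -> 'I_n -> 'I_t) : Prop :=
  exists alpha : 'I_n -> R,
    (forall j, 0 <= alpha j) /\ \sum_(j < n) alpha j = 1 /\
    forall i i' : 'I_k,
      \sum_(j < n) alpha j *: F j (s i j) = \sum_(j < n) alpha j *: F j (s i' j).

(* Main.v *)
Require Import Defs.
From mathcomp Require Import all_boot all_order all_algebra.
From mathcomp Require Import reals.
From HB Require Import structures.
From mathcomp Require Import ring lra.
From mathcomp Require Import boolp classical_sets topology normedtype derive.
Set Implicit Arguments. Unset Strict Implicit. Unset Printing Implicit Defensive.
Import Order.TTheory GRing.Theory Num.Theory.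
Import numFieldNormedType.Exports.
Local Open Scope classical_set_scope.
Local Open Scope ring_scope.

Section Closest.
Variable R : realType.

Definition dot (D : nat) (u v : 'rV[R]_D) : R := \sum_(i < D) u 0 i * v 0 i.

Lemma cont_sum m (I : Type) (r : seq I) (G : I -> 'rV[R]_m -> R) :
  (forall i, continuous (G i)) -> continuous (fun v => \sum_(i <- r) G i v).
Proof.
move=> HG; elim: r => [|a r IH].
  by under eq_fun do rewrite big_nil; apply: cst_continuous.
under eq_fun do rewrite big_cons.
by move=> x; apply: continuousD; [apply: HG| apply: IH].
Qed.

Definition simplex m : set 'rV[R]_m :=
  [set v | (forall i, 0 <= v 0 i) /\ \sum_i v 0 i = 1].

Lemma simplex_le1 m (v : 'rV[R]_m) i : simplex v -> v 0 i <= 1.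
Proof.
move=> [v0 v1]; rewrite -v1 (bigD1 i) //= lerDl.
by apply: sumr_ge0 => j _.
Qed.

Lemma simplex_compact m : compact (@simplex m).
Proof.
apply: (@subclosed_compact _ _ [set v : 'rV[R]_m | forall i, `[0, 1]%classic (v 0 i)]).
- have -> : @simplex m = (\bigcap_(i in [set: 'I_m]) [set v : 'rV[R]_m | 0 <= v 0 i])
      `&` ((fun v : 'rV[R]_m => \sum_i v 0 i) @^-1` [set x | x = 1]).
    apply/seteqP; split => v /=.
      by move=> [H1 H2]; split => // i _; exact: H1.
    by move=> [H1 H2]; split => // i; exact: H1.
  apply: closedI.
    apply: closed_bigI => i _.
    apply: (@preimage_closed _ _ (fun v : 'rV[R]_m => v 0 i) [set x | 0 <= x]).
      by move=> x _; apply: coord_continuous.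
    exact: closed_ge.
  apply: preimage_closed; last exact: closed_eq.
  move=> x _; apply: (cont_sum (G := fun i v => v 0 i)) => i.
  exact: coord_continuous.
- exact: (@rV_compact R m (fun=> `[(0:R), 1]%classic) (fun=> @segment_compact R 0 1)).
- move=> v Hv i /=; rewrite in_itv /=; apply/andP; split.
    by case: Hv.
  exact: simplex_le1.
Qed.


Definition comb D m (p : 'I_m -> 'rV[R]_D) (v : 'rV[R]_m) := \sum_i v 0 i *: p i.

Lemma closest D m (p : 'I_m.+1 -> 'rV[R]_D) :
  exists2 v, simplex v & forall w, simplex w ->
    dot (comb p v) (comb p v) <= dot (comb p w) (comb p w).
Proof.
have cont : continuous (fun v => dot (comb p v) (comb p v)).
  rewrite /dot /comb.
  under eq_fun do under eq_bigr do rewrite !summxE.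
  have ci : forall c, continuous (fun v : 'rV[R]_m.+1 => \sum_i (v 0 i *: p i) 0 c).
    move=> c; apply: cont_sum => i y.
    under eq_fun do rewrite mxE.
    apply: continuousM; [apply: coord_continuous | apply: cst_continuous].
  apply: (cont_sum (G := fun c v => (\sum_i (v 0 i *: p i) 0 c) * (\sum_i (v 0 i *: p i) 0 c))).
  by move=> c x; apply: continuousM; apply: ci.
have ne : (@simplex m.+1) !=set0.
  exists (delta_mx 0 0); split.
    by move=> i; rewrite mxE; case: eqP => _ /=; rewrite ?ler01.
  by rewrite (bigD1 0) //= mxE eqxx big1 ?addr0 // => i /negbTE; rewrite mxE => ->.
have [v vS Hv] := @EVT_min_rV R m.+1 _ (@simplex m.+1)
  ne (@simplex_compact m.+1) (continuous_subspaceT cont).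
exists v; first by move: vS; rewrite inE.
by move=> w wS; apply: Hv; rewrite inE.
Qed.


Section DotAlg.
Variable D : nat.
Implicit Types u v w : 'rV[R]_D.

Lemma dotDl u w v : dot (u + w) v = dot u v + dot w v.
Proof. by rewrite /dot -big_split; apply: eq_bigr => i _; rewrite mxE mulrDl. Qed.

Lemma dotZl a u v : dot (a *: u) v = a * dot u v.
Proof. by rewrite /dot mulr_sumr; apply: eq_bigr => i _; rewrite mxE mulrA. Qed.

Lemma dotC u v : dot u v = dot v u.
Proof. by apply: eq_bigr => i _; rewrite mulrC. Qed.

Lemma dotDr u w v : dot v (u + w) = dot v u + dot v w.
Proof. by rewrite dotC dotDl !(dotC v). Qed.

Lemma dotZr a u v : dot v (a *: u) = a * dot v u.
Proof. by rewrite dotC dotZl dotC. Qed.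

Lemma dot0l v : dot 0 v = 0.
Proof. by apply: big1 => i _; rewrite mxE mul0r. Qed.

Lemma dotNl u v : dot (- u) v = - dot u v.
Proof. by rewrite -scaleN1r dotZl mulN1r. Qed.

Lemma dotBl u w v : dot (u - w) v = dot u v - dot w v.
Proof. by rewrite dotDl dotNl. Qed.

Lemma dot_suml (I : Type) (r : seq I) (P : pred I) (F : I -> 'rV[R]_D) v :
  dot (\sum_(i <- r | P i) F i) v = \sum_(i <- r | P i) dot (F i) v.
Proof. by apply: (big_morph (fun u => dot u v) (fun u w => dotDl u w v) (dot0l v)). Qed.

Lemma dot_ge0 u : 0 <= dot u u.
Proof. by apply: sumr_ge0 => i _; rewrite -expr2 sqr_ge0. Qed.

Lemma dot_eq0 u : dot u u = 0 -> u = 0.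
Proof.
move=> H; apply/rowP => i; rewrite mxE.
have := @psumr_eq0P _ _ xpredT (fun i => u 0 i * u 0 i) (fun i _ => ltac:(by rewrite /= -expr2 sqr_ge0)) H i isT.
by move/eqP; rewrite mulf_eq0 orbb => /eqP.
Qed.

Lemma improve (x q : 'rV[R]_D) : dot x (q - x) < 0 ->
  exists s, 0 < s <= 1 /\ dot ((1 - s) *: x + s *: q) ((1 - s) *: x + s *: q) < dot x x.
Proof.
set a := dot x (q - x) => a0.
set b := dot (q - x) (q - x).
have b0 : 0 <= b := dot_ge0 _.
have ba : 0 < b - a by lra.
pose s := - a / (b - a).
have hs : s * (b - a) = - a by rewrite /s mulfVK // gt_eqF.
have s0 : 0 < s by rewrite /s divr_gt0 // oppr_gt0.
have s1 : s <= 1 by rewrite /s ler_pdivrMr // mul1r; lra.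
exists s; split; first by rewrite s0 s1.
have -> : (1 - s) *: x + s *: q = x + s *: (q - x).
  by rewrite scalerBl scale1r scalerBr addrA addrAC.
rewrite !dotDl !dotZl !dotDr !dotZr -/a -/b (dotC (q - x) x) -/a.
nra.
Qed.

Lemma dependent n (p : 'I_n -> 'rV[R]_D) : (D < n)%N ->
  exists mu : 'I_n -> R, (exists i, mu i != 0) /\ \sum_i mu i *: p i = 0.
Proof.
move=> Dn.
pose M := \matrix_(i < n, j < D) p i 0 j.
have kr : \rank (kermx M) != 0%N.
  rewrite mxrank_ker subn_eq0 -ltnNge.
  exact: leq_ltn_trans (rank_leq_col M) Dn.
have [i ri] : exists i, row i (kermx M) != 0.
  apply/existsP; apply: contraR kr; rewrite negb_exists => /forallP H.
  rewrite mxrank_eq0; apply/eqP/row_matrixP => i; rewrite row0.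
  by move: (H i); rewrite negbK => /eqP.
set v := row i (kermx M) in ri.
have vM : v *m M = 0 by rewrite -row_mul mulmx_ker row0.
exists (fun j => v 0 j); split.
  apply/existsP; apply: contraR ri; rewrite negb_exists => /forallP H.
  by apply/eqP/rowP => j; move: (H j); rewrite negbK => /eqP ->; rewrite mxE.
rewrite -[RHS]vM mulmx_sum_row; apply: eq_bigr => j _; congr (_ *: _).
by apply/rowP => c; rewrite !mxE.
Qed.

Lemma comb_lin m (p : 'I_m -> 'rV[R]_D) a b (v w : 'rV[R]_m) :
  comb p (a *: v + b *: w) = a *: comb p v + b *: comb p w.
Proof.
rewrite /comb !scaler_sumr -big_split; apply: eq_bigr => i _.
by rewrite !mxE scalerDl !scalerA.
Qed.

Lemma comb_delta m (p : 'I_m -> 'rV[R]_D) j : comb p (delta_mx 0 j) = p j.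
Proof.
rewrite /comb (bigD1 j) //= mxE !eqxx scale1r big1 ?addr0 // => i /negbTE ij.
by rewrite mxE ij andbF scale0r.
Qed.

Lemma simplex_delta m (j : 'I_m) : simplex (delta_mx 0 j).
Proof.
split; first by move=> i; rewrite mxE; case: eqP => _ /=; rewrite ?ler01.
by rewrite (bigD1 j) //= mxE !eqxx big1 ?addr0 // => i /negbTE; rewrite mxE eq_sym => ->.
Qed.

Lemma simplex_conv m (v w : 'rV[R]_m) s : simplex v -> simplex w -> 0 <= s <= 1 ->
  simplex ((1 - s) *: v + s *: w).
Proof.
move=> [v0 v1] [w0 w1] /andP[s0 s1]; split.
  move=> i; rewrite !mxE; apply: addr_ge0; apply: mulr_ge0 => //; lra.
rewrite (eq_bigr (fun i => (1 - s) * v 0 i + s * w 0 i)); last by move=> i _; rewrite !mxE.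
by rewrite big_split /= -!mulr_sumr v1 w1; lra.
Qed.

End DotAlg.


Lemma colourful_cara n D m (P : 'I_n -> 'I_m -> 'rV[R]_D) : (D < n)%N ->
  (forall j, exists beta : 'I_m -> R, (forall r, 0 <= beta r) /\
      \sum_r beta r = 1 /\ \sum_r beta r *: P j r = 0) ->
  exists (c : 'I_n -> 'I_m) (al : 'I_n -> R), (forall j, 0 <= al j) /\
      \sum_j al j = 1 /\ \sum_j al j *: P j (c j) = 0.
Proof.
case: n P => [//|n'] P Dn Hb.
case: m P Hb => [|m'] P Hb.
  have [be [_ [b1 _]]] := Hb ord0.
  by move: b1; rewrite big_ord0 => /eqP; rewrite eq_sym oner_eq0.
pose nrm (u : 'rV[R]_D) := dot u u.
pose pts (c : {ffun 'I_n'.+1 -> 'I_m'.+1}) j := P j (c j).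
have Hcl : forall c : {ffun 'I_n'.+1 -> 'I_m'.+1}, exists v, simplex v /\
    forall w, simplex w -> nrm (comb (pts c) v) <= nrm (comb (pts c) w).
  by move=> c; have [v vS Hv] := closest (pts c); exists v.
have [f Hf] := choice Hcl.
pose phi c := nrm (comb (pts c) (f c)).
pose c0 : {ffun 'I_n'.+1 -> 'I_m'.+1} := [ffun=> ord0].
pose cs := [arg min_(c < c0) phi c]%O.
have csmin : forall c, phi cs <= phi c.
  rewrite /cs; case: arg_minP => // c _ H c'; exact: H.
pose lam := f cs.
have [lS lmin] := Hf cs.
pose x := comb (pts cs) lam.
have [x0|xn0] := eqVneq x 0.
  exists (fun j => cs j), (fun j => lam 0 j); split; first by case: lS.
  by split; [case: lS | exact: x0].
have nx : 0 < nrm x.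
  rewrite lt_def dot_ge0 andbT; apply: contra xn0 => /eqP H; apply/eqP; exact: dot_eq0.
have FO : forall j, nrm x <= dot x (pts cs j).
  move=> j; rewrite leNgt; apply/negP => H.
  have : dot x (pts cs j - x) < 0 by rewrite dotC dotBl dotC subr_lt0.
  move=> /improve [s [/andP[s0 s1] Hs]].
  have S' : simplex ((1 - s) *: lam + s *: delta_mx 0 j).
    by apply: simplex_conv => //; [exact: simplex_delta | rewrite (ltW s0) s1].
  have := lmin _ S'; rewrite comb_lin comb_delta -/x.
  by rewrite leNgt Hs.
have [lam' [l'S [i0 [l'0 l'x]]]] : exists lam', simplex lam' /\
    exists i0, lam' 0 i0 = 0 /\ comb (pts cs) lam' = x.
  case: (pickP (fun i => lam 0 i == 0)) => [i0 /eqP Hi0 | Hpos].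
    by exists lam; split => //; exists i0.
  have lpos : forall j, 0 < lam 0 j.
    by move=> j; rewrite lt_def (negbT (Hpos j)) /=; case: lS.
  have dlam : \sum_j lam 0 j * dot x (pts cs j) = nrm x.
    rewrite /nrm {3}/x /comb dotC dot_suml; apply: eq_bigr => j _.
    by rewrite dotZl dotC.
  have eqd : forall j, dot x (pts cs j) = nrm x.
    have H : \sum_j lam 0 j * (dot x (pts cs j) - nrm x) = 0.
      rewrite (eq_bigr (fun j => lam 0 j * dot x (pts cs j) - lam 0 j * nrm x));
        last by move=> j _; rewrite mulrBr.
      by rewrite sumrB -mulr_suml dlam (proj2 lS) mul1r subrr.
    have FO' : forall j, 0 <= dot x (pts cs j) - nrm x by move=> j; rewrite subr_ge0 FO.
    move=> j.
    have := @psumr_eq0P _ _ xpredT (fun j => lam 0 j * (dot x (pts cs j) - nrm x))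
      (fun j _ => mulr_ge0 (ltW (lpos j)) (FO' j)) H j isT.
    by move/eqP; rewrite mulf_eq0 (gt_eqF (lpos j)) /= subr_eq0 => /eqP.
  have [mu [[j1 mj1] smu]] := dependent (pts cs) Dn.
  have summu : \sum_j mu j = 0.
    have : dot (\sum_j mu j *: pts cs j) x = 0 by rewrite smu dot0l.
    rewrite dot_suml (eq_bigr (fun j => mu j * nrm x)); last first.
      by move=> j _; rewrite dotZl dotC eqd.
    by rewrite -mulr_suml => /eqP; rewrite mulf_eq0 (gt_eqF nx) orbF => /eqP.
  have [j2 mj2] : exists j, 0 < mu j.
    case: (pickP (fun j => 0 < mu j)) => [j H|H]; first by exists j.
    have H' : forall j, 0 <= - mu j by move=> j; rewrite oppr_ge0 leNgt H.
    have : \sum_j - mu j = 0 by rewrite sumrN summu oppr0.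
    move/(@psumr_eq0P _ _ xpredT (fun j => - mu j) (fun j _ => H' j)) => /(_ j1 isT) /eqP.
    by rewrite oppr_eq0 (negbTE mj1).
  pose j0 := [arg min_(j < j2 | 0 < mu j) (lam 0 j / mu j)]%O.
  have [j0pos j0min] : 0 < mu j0 /\ forall j, 0 < mu j -> lam 0 j0 / mu j0 <= lam 0 j / mu j.
    by rewrite /j0; case: arg_minP => // j Hj Hmin; split => // j' Hj'; exact: Hmin.
  pose tt := lam 0 j0 / mu j0.
  have tt0 : 0 <= tt by rewrite divr_ge0 // ltW.
  pose lam' := \row_j (lam 0 j - tt * mu j).
  exists lam'; split.
    split.
      move=> j; rewrite mxE subr_ge0.
      case: (ltP 0 (mu j)) => H.
        by rewrite -ler_pdivlMr // j0min.
      apply: le_trans (ltW (lpos j)).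
      by rewrite mulr_ge0_le0.
    rewrite (eq_bigr (fun j => lam 0 j - tt * mu j)); last by move=> j _; rewrite mxE.
    by rewrite sumrB -mulr_sumr summu mulr0 subr0 (proj2 lS).
  exists j0; split.
    by rewrite mxE /tt mulfVK ?subrr // gt_eqF.
  rewrite /comb (eq_bigr (fun j => lam 0 j *: pts cs j - tt *: (mu j *: pts cs j))).
    by rewrite sumrB -scaler_sumr smu scaler0 subr0.
  by move=> j _; rewrite mxE scalerBl scalerA.
have [be [be0 [be1 beP]]] := Hb i0.
have [r rlt] : exists r, dot x (P i0 r) < nrm x.
  case: (pickP (fun r => dot x (P i0 r) < nrm x)) => [r H|H]; first by exists r.
  have E : dot (\sum_r be r *: P i0 r) x = 0 by rewrite beP dot0l.
  have : \sum_r be r * nrm x <= dot (\sum_r be r *: P i0 r) x.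
    rewrite dot_suml; apply: ler_sum => r _; rewrite dotZl dotC.
    by apply: ler_wpM2l => //; rewrite leNgt H.
  by rewrite E -mulr_suml be1 mul1r leNgt nx.
pose c' : {ffun 'I_n'.+1 -> 'I_m'.+1} := [ffun j => if j == i0 then r else cs j].
have cx : comb (pts c') lam' = x.
  rewrite -l'x /comb; apply: eq_bigr => j _; case: (eqVneq j i0) => [->|jn].
    by rewrite l'0 !scale0r.
  by rewrite /pts ffunE (negbTE jn).
have : dot x (P i0 r - x) < 0.
  by rewrite dotC dotBl subr_lt0 dotC.
move=> /improve [s [/andP [s0 s1] Hs]].
have s01 : 0 <= s <= 1 by rewrite (ltW s0) s1.
have S' := simplex_conv l'S (simplex_delta i0) s01.
have := (proj2 (Hf c')) _ S'.
rewrite comb_lin comb_delta cx /pts ffunE eqxx => H1.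
have := csmin c'.
rewrite /phi -/lam -/x.
move=> H2.
have := lt_le_trans (le_lt_trans H1 Hs) H2.
by rewrite ltxx.
Qed.

End Closest.

Close Scope classical_set_scope.

Lemma core2 (R : realType) (k n : nat) (J : {set 'I_n}) (sg : 'I_n -> 'I_k -> nat)
  (h : 'I_n -> nat -> R) (al : 'I_n -> R) :
  (#|J| < k)%N -> (forall j, injective (sg j)) -> (forall j l, 0 < h j l) ->
  (forall j l l', (l < l')%N -> k%:R * h j l <= h j l') -> (forall j, 0 <= al j) ->
  (forall i i', \sum_(j in J) al j * h j (sg j i) = \sum_(j in J) al j * h j (sg j i')) ->
  forall j, j \in J -> al j = 0.
Proof.
case: k sg => [//|k'] sg HJ inj hpos hgrow al0 Heq.
pose m j := [arg max_(i > ord0) sg j i].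
have [b Hb] : exists b, b \notin [set m j | j in J].
  case: (pickP (fun b => b \notin [set m j | j in J])) => [b Hb|H]; first by exists b.
  have : [set: 'I_k'.+1] \subset [set m j | j in J].
    by apply/fintype.subsetP=> x _; move: (H x) => /negbFE.
  move/subset_leq_card; rewrite cardsT card_ord => H2.
  have := leq_trans H2 (leq_imset_card m J).
  by rewrite leqNgt HJ.
have lt : forall j, j \in J -> (sg j b < sg j (m j))%N.
  move=> j jJ.
  have mJ : m j \in [set m j | j in J] by apply/imsetP; exists j.
  have bm : b != m j by apply: contraNneq Hb => ->.
  move: bm; rewrite /m; case: arg_maxnP => // i _ Hi bm.
  rewrite ltn_neqAle; apply/andP; split; last exact: Hi.
  by apply: contra bm => /eqP /inj ->.
pose S i := \sum_(j in J) al j * h j (sg j i).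
pose inner j := \sum_(j' in J) (h j (sg j (m j')) - h j (sg j b)).
have H0 : \sum_(j in J) al j * inner j = 0.
  transitivity (\sum_(j' in J) (S (m j') - S b)).
    rewrite /inner /S.
    under eq_bigr do rewrite mulr_sumr.
    rewrite exchange_big /=; apply: eq_bigr => j' _.
    rewrite -sumrB; apply: eq_bigr => j _; by rewrite mulrBr.
  by apply: big1 => jj _; rewrite /S (Heq _ b) subrr.
have inpos : forall j, j \in J -> 0 < inner j.
  move=> j jJ; rewrite /inner sumrB sumr_const -[#|_|]/(#|J|).
  rewrite (bigD1 j) //=.
  have hb := hpos j (sg j b).
  have H1 : k'.+1%:R * h j (sg j b) <= h j (sg j (m j)) by apply: hgrow; apply: lt.
  have H2 : 0 <= \sum_(i in J | i != j) h j (sg j (m i)).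
    by apply: sumr_ge0 => i _; apply: ltW.
  have H3 : (#|J|%:R : R) <= k'%:R by rewrite ler_nat -ltnS.
  rewrite -mulr_natr.
  have H4 : k'.+1%:R * h j (sg j b) = k'%:R * h j (sg j b) + h j (sg j b).
    by rewrite -natr1 mulrDl mul1r.
  have H5 : #|J|%:R * h j (sg j b) <= k'%:R * h j (sg j b).
    by rewrite ler_pM2r.
  rewrite (mulrC (h _ _)).
  lra.
move=> j jJ.
have /eqP := @psumr_eq0P _ _ (fun j => j \in J) (fun j => al j * inner j)
  (fun i iJ => mulr_ge0 (al0 i) (ltW (inpos i iJ))) H0 j jJ.
by rewrite mulf_eq0 (gt_eqF (inpos j jJ)) orbF => /eqP.
Qed.

Lemma part2 (R : realType) (k d : nat) : (1 <= k)%N -> (1 <= d)%N ->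
  forall n t : nat,
      (1 <= n)%N -> (n < (k - 1) * d + 1)%N -> (k <= t)%N ->
      exists F : 'I_n -> 'I_t -> 'rV[R]_d,
        distinct_points F /\
        forall s : 'I_k -> 'I_n -> 'I_t,
          colourful_partition s -> ~ eq_coeff_intersect F s.
Proof.
move=> k1 d0 n t n1 nlt kt.
pose cl (j : 'I_n) : 'I_d := Ordinal (ltn_pmod j d0).
pose x : R := k.+1%:R.
have x1 : 1 < x by rewrite /x ltr1n ltnS.
pose h (j : 'I_n) (l : nat) : R := x ^+ (j * t + l).
have hpos : forall j l, 0 < h j l by move=> j l; rewrite exprn_gt0 // (lt_trans ltr01).
have expinj : forall a b, x ^+ a = x ^+ b -> a = b.
  move=> a b E; apply/eqP; rewrite eqn_leq -!(ler_eXn2l x1) E lexx //.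
exists (fun j l => h j l *: delta_mx 0 (cl j)).
split.
  move=> [j l] [j' l'] /= E.
  have E1 := congr1 (fun M : 'rV[R]_d => M 0 (cl j)) E; rewrite /= !mxE !eqxx /= in E1.
  have cle : cl j = cl j'.
    apply/eqP; case: eqP E1 => // _; rewrite mulr1 mulr0 => E1.
    by move: (hpos j l); rewrite E1 ltxx.
  move: E1; rewrite cle eqxx /= !mulr1 => E1; have E2 := expinj _ _ E1.
  have t0 : (0 < t)%N by apply: leq_trans kt.
  have ll : l = l' :> nat.
    by move: (congr1 (modn^~ t) E2); rewrite !modnMDl !modn_small.
  have jj : j = j' :> nat.
    move: (congr1 (divn^~ t) E2); by rewrite !divnMDl // !divn_small // !addn0.
  have -> : l = l' := val_inj ll.
  by have -> : j = j' := val_inj jj.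
move=> s cs [al [al0 [sum1 Heq]]].
have entry : forall i j, (\sum_(j0 < n) al j0 *: (h j0 (s i j0) *: (delta_mx 0 (cl j0) : 'rV[R]_d))) 0 (cl j)
    = \sum_(j0 in [set j' | cl j' == cl j]) al j0 * h j0 (s i j0).
  move=> i j; rewrite summxE [RHS]big_mkcond; apply: eq_bigr => j0 _.
  rewrite !mxE inE eqxx /= eq_sym.
  by case: eqP => _; rewrite ?mulr1 ?mulr0.
have nle : (n <= (k - 1) * d)%N by move: nlt; rewrite addn1 ltnS.
have all0 : forall j, al j = 0.
  move=> j; pose J := [set j' | cl j' == cl j].
  have Hg : forall j0 : 'I_n, (j0 %/ d < k - 1)%N.
    by move=> j0; rewrite ltn_divLR //; exact: leq_trans (ltn_ord j0) nle.
  pose g (j0 : 'I_n) : 'I_(k - 1) := Ordinal (Hg j0).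
  have cardJ : (#|J| < k)%N.
    rewrite -(@card_in_imset _ _ g).
      apply: (leq_ltn_trans (max_card _)); rewrite card_ord.
      by rewrite ltn_subrL k1.
    move=> j1 j2; rewrite !inE => /eqP c1 /eqP c2 /(congr1 val) /= E.
    apply: val_inj; rewrite /= (divn_eq j1 d) (divn_eq j2 d) E.
    by move: (congr1 val (etrans c1 (esym c2))) => /= ->.
  apply: (@core2 R k n J (fun j i => s i j) h al cardJ) => //.
  - by move=> j0 i1 i2 /= /val_inj; apply: (cs j0).
  - move=> j0 l l' ll'.
    rewrite /h.
    have : x ^+ (j0 * t + l).+1 <= x ^+ (j0 * t + l') by rewrite (ler_eXn2l x1) ltn_add2l.
    rewrite exprS.
    have : k%:R <= x by rewrite /x ler_nat.
    have := hpos j0 l; rewrite /h.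
    move=> p kx xx; apply: le_trans xx.
    by rewrite ler_pM2r.
  - move=> i i'; rewrite -!entry; by rewrite (Heq i i').
  - by rewrite inE.
move: sum1; rewrite big1; last by move=> j _; exact: all0.
by move/eqP; rewrite eq_sym oner_eq0.
Qed.

Lemma sum_shift (R : realType) k' (G : 'I_k'.+1 -> R) (a : 'I_k'.+1) :
  \sum_r G (a + r) = \sum_r G r.
Proof. by rewrite [RHS](reindex_inj (addrI a)). Qed.

Lemma part1 (R : realType) (k d : nat) : (1 <= k)%N -> (1 <= d)%N ->
  forall (n t : nat) (F : 'I_n -> 'I_t -> 'rV[R]_d),
      n = ((k - 1) * d + 1)%N -> t = k -> distinct_points F ->
      exists s : 'I_k -> 'I_n -> 'I_t,
        colourful_partition s /\ eq_coeff_intersect F s.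
Proof.
move=> k1 d1 n t F En tk _; subst t.
case: k k1 F En => [//|k'] _ F En.
have Dn : (k' * d < n)%N by rewrite En subn1 /= addn1.
pose w := widen_ord (leqnSn k').
pose M j r : 'M[R]_(k', d) := \matrix_(i < k', c < d) (F j (w i + r) 0 c - F j (ord_max + r) 0 c).
pose Y j r := mxvec (M j r).
have HY : forall j, exists beta : 'I_k'.+1 -> R, (forall r, 0 <= beta r) /\
      \sum_r beta r = 1 /\ \sum_r beta r *: Y j r = 0.
  move=> j; exists (fun=> k'.+1%:R^-1); split; first by move=> r; rewrite invr_ge0 ler0n.
  split.
    by rewrite sumr_const card_ord -[LHS]mulr_natl mulfV // pnatr_eq0.
  rewrite -scaler_sumr /Y -linear_sum /=.
  have -> : \sum_r M j r = 0.
    apply/matrixP => i c; rewrite summxE !mxE.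
    under eq_bigr do rewrite mxE.
    by rewrite sumrB (sum_shift (fun l => F j l 0 c)) (sum_shift (fun l => F j l 0 c)) subrr.
  by rewrite linear0 scaler0.
have [c [al [al0 [al1 alY]]]] := colourful_cara Dn HY.
exists (fun i j => i + c j); split.
  by move=> j; apply: addIr.
exists al; split => //; split => //.
have key : forall i, \sum_j al j *: F j (i + c j) = \sum_j al j *: F j (ord_max + c j).
  have M0 : \sum_j al j *: M j (c j) = 0.
    apply/eqP; rewrite -mxvec_eq0; apply/eqP; rewrite linear_sum /=.
    by rewrite -[RHS]alY; apply: eq_bigr => j _; rewrite linearZ.
  move=> i; apply/rowP => e; rewrite !summxE.
  case: (ltnP i k') => ik.
    have := congr1 (fun A : 'M[R]_(k', d) => A (Ordinal ik) e) M0.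
    rewrite summxE mxE /=.
    under eq_bigr do rewrite !mxE.
    have -> : w (Ordinal ik) = i by apply: val_inj.
    rewrite (eq_bigr (fun j => al j * F j (i + c j) 0 e - al j * F j (ord_max + c j) 0 e)); last by move=> j _; rewrite mulrBr.
    rewrite sumrB => /eqP; rewrite subr_eq0 => /eqP H.
    rewrite (eq_bigr (fun j => al j * F j (i + c j) 0 e)) ?H; last by move=> j _; rewrite mxE.
    by apply: eq_bigr => j _; rewrite mxE.
  have -> : i = ord_max by apply: val_inj; apply/eqP; rewrite eqn_leq ik -ltnS ltn_ord.
  by [].
by move=> i i'; rewrite key (key i').
Qed.

Unset Implicit Arguments.

Theorem theorem1 (R : realType) (k d : nat) :
  (1 <= k)%N -> (1 <= d)%N ->
  (forall (n t : nat) (F : 'I_n -> 'I_t -> 'rV[R]_d),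
      n = ((k - 1) * d + 1)%N -> t = k -> distinct_points F ->
      exists s : 'I_k -> 'I_n -> 'I_t,
        colourful_partition s /\ eq_coeff_intersect F s)
  /\
  (forall n t : nat,
      (1 <= n)%N -> (n < (k - 1) * d + 1)%N -> (k <= t)%N ->
      exists F : 'I_n -> 'I_t -> 'rV[R]_d,
        distinct_points F /\
        forall s : 'I_k -> 'I_n -> 'I_t,
          colourful_partition s -> ~ eq_coeff_intersect F s).
Proof.
move=> k1 d1; split.
  exact: part1.
exact: part2.
Qed.
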